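(* For any POVM $\{\mathcal{M}_i\}_{i\in\mathcal{O}}$ on $\mathcal{H}$, \[2K^*(\{\mathcal{M}_i\}_{i\in\mathcal{O}})=\max_{|\psi\rangle\perp|\phi\rangle}\sum_{i\in\mathcal{O}}|\mathrm{tr}(\mathcal{M}_i(\psi-\phi))|,\] where the maximum is over pairs of unit vectors with $\langle\psi|\phi\rangle=0$, and $\psi=|\psi\rangle\langle\psi|$, $\phi=|\phi\rangle\langle\phi|$.
   Context: $\mathcal{H}$ is a finite-dimensional Hilbert space of dimension at least 2, $\mathcal{D}(\mathcal{H})$ its density matrices. A POVM is a finite family $\{\mathcal{M}_i\}_{i\in\mathcal{O}}$ of positive semidefinite matrices with $\sum_i\mathcal{M}_i=I$, and $K^*(\{\mathcal{M}_i\}_{i\in\mathcal{O}})=\max_{\rho,\sigma\in\mathcal{D}(\mathcal{H})}\frac12\sum_{i\in\mathcal{O}}|\mathrm{tr}(\mathcal{M}_i(\rho-\sigma))|$. *)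

(* Defs.v *)
From HB Require Import structures.
From mathcomp Require Import all_boot all_order all_algebra.
From mathcomp Require Import complex.
From mathcomp Require Import reals.
Set Implicit Arguments. Unset Strict Implicit. Unset Printing Implicit Defensive.
Import Order.TTheory GRing.Theory Num.Theory.
Local Open Scope ring_scope.
Local Open Scope complex_scope.

Definition adjmx (C : numClosedFieldType) (m n : nat) (A : 'M[C]_(m, n)) : 'M[C]_(n, m) :=
  (map_mx Num.conj A)^T.

Definition psd (C : numClosedFieldType) (n : nat) (A : 'M[C]_n) : Prop :=
  A = adjmx A /\ forall x : 'cV[C]_n, 0 <= (adjmx x *m A *m x) 0 0.

Definition density (C : numClosedFieldType) (n : nat) (rho : 'M[C]_n) : Prop :=
  psd rho /\ \tr rho = 1.

Definition POVM (C : numClosedFieldType) (n : nat) (O : finType) (M : O -> 'M[C]_n) : Prop :=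
  (forall i, psd (M i)) /\ \sum_(i : O) M i = 1%:M.

Definition unit_vec (C : numClosedFieldType) (n : nat) (v : 'cV[C]_n) : Prop :=
  (adjmx v *m v) 0 0 = 1.

Definition orthogonal_vec (C : numClosedFieldType) (n : nat) (u v : 'cV[C]_n) : Prop :=
  (adjmx u *m v) 0 0 = 0.

Definition proj (C : numClosedFieldType) (n : nat) (v : 'cV[C]_n) : 'M[C]_n :=
  v *m adjmx v.

Definition dist_sum (C : numClosedFieldType) (n : nat) (O : finType) (M : O -> 'M[C]_n)
  (rho sigma : 'M[C]_n) : C :=
  \sum_(i : O) `| \tr (M i *m (rho - sigma)) |.

Definition is_max (C : numClosedFieldType) (S : C -> Prop) (v : C) : Prop :=
  S v /\ forall w, S w -> w <= v.

(* the set of values (1/2) sum_i |tr(M_i(rho - sigma))| over density matrices;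
   K^* is its maximum *)
Definition Kvals (C : numClosedFieldType) (n : nat) (O : finType) (M : O -> 'M[C]_n) (w : C) : Prop :=
  exists rho sigma, density rho /\ density sigma /\ w = 2^-1 * dist_sum M rho sigma.

Definition PureVals (C : numClosedFieldType) (n : nat) (O : finType) (M : O -> 'M[C]_n) (w : C) : Prop :=
  exists psi phi : 'cV[C]_n, unit_vec psi /\ unit_vec phi /\ orthogonal_vec psi phi /\
    w = dist_sum M (proj psi) (proj phi).

(* Main.v *)
Require Import Defs.
From HB Require Import structures.
From mathcomp Require Import all_boot all_order all_algebra.
From mathcomp Require Import complex reals.
From mathcomp Require Import sesquilinear spectral.
Import Order.TTheory GRing.Theory Num.Theory.
Local Open Scope ring_scope.

Lemma adjmxE (C : numClosedFieldType) m k (A : 'M[C]_(m, k)) i j :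
  adjmx A i j = (A j i)^*.
Proof. by rewrite /adjmx !mxE. Qed.

Lemma adjmxK (C : numClosedFieldType) m k (A : 'M[C]_(m, k)) :
  adjmx (adjmx A) = A.
Proof. by apply/matrixP => i j; rewrite !adjmxE conjCK. Qed.

Lemma adjmxM (C : numClosedFieldType) m k p (A : 'M[C]_(m, k)) (B : 'M[C]_(k, p)) :
  adjmx (A *m B) = adjmx B *m adjmx A.
Proof.
apply/matrixP => i j; rewrite adjmxE !mxE rmorph_sum; apply: eq_bigr => l _.
by rewrite !adjmxE rmorphM mulrC.
Qed.

Lemma adjmxB (C : numClosedFieldType) m k (A B : 'M[C]_(m, k)) :
  adjmx (A - B) = adjmx A - adjmx B.
Proof. by apply/matrixP => i j; rewrite !mxE rmorphB. Qed.

Lemma tr_adjmx (C : numClosedFieldType) m (A : 'M[C]_m) :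
  \tr (adjmx A) = (\tr A)^*.
Proof. by rewrite /mxtrace rmorph_sum; apply: eq_bigr => i _; rewrite adjmxE. Qed.

Lemma tr_herm_real (C : numClosedFieldType) m (H K : 'M[C]_m) :
  H = adjmx H -> K = adjmx K -> \tr (H *m K) \is Num.real.
Proof.
move=> hH hK; rewrite CrealE -tr_adjmx adjmxM -hH -hK mxtrace_mulC //.
Qed.

Lemma tr11 (C : numClosedFieldType) (A : 'M[C]_1) : \tr A = A 0 0.
Proof. by rewrite /mxtrace big_ord1. Qed.

Lemma mx11M (C : numClosedFieldType) (D : 'M[C]_(1,1)) (E : 'M[C]_(1,1)):
  (D *m E) 0 0 = D 0 0 * E 0 0.
Proof. by rewrite !mxE big_ord1. Qed.

Lemma proj_density (C : numClosedFieldType) m (v : 'cV[C]_m) :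
  unit_vec v -> density (proj v).
Proof.
move=> hv; split; last by rewrite /proj mxtrace_mulC tr11.
split; first by rewrite /proj adjmxM adjmxK.
move=> x; rewrite /proj mulmxA -mulmxA.
rewrite mx11M.
have -> : (adjmx v *m x) = adjmx (adjmx x *m v) by rewrite adjmxM adjmxK.
by rewrite adjmxE mul_conjC_ge0.
Qed.

Lemma fmax (C : numClosedFieldType) (I : finType) (Q : I -> C -> Prop) (i0 : I) :
  (forall i, exists x, x \is Num.real /\ Q i x) ->
  exists i x, x \is Num.real /\ Q i x /\ forall j, exists y, Q j y /\ y <= x.
Proof.
move=> hQ.
suff: forall s : seq I, exists i x, x \is Num.real /\ Q i x /\
  forall j, j \in s -> exists y, Q j y /\ y <= x.
  move=> /(_ (enum I)) [i [x [rx [Qx hx]]]]; exists i, x; split=> //; split=> //.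
  by move=> j; apply: hx; rewrite mem_enum.
elim=> [|j s [i [x [rx [Qx hx]]]]].
  have [x [rx Qx]] := hQ i0; exists i0, x; split=> //; split=> //.
have [y [ry Qy]] := hQ j.
have /orP [yx|xy] := real_leVge ry rx.
  exists i, x; split=> //; split=> // k; rewrite inE => /orP [/eqP->|ks].
    by exists y.
  exact: hx.
exists j, y; split=> //; split=> // k; rewrite inE => /orP [/eqP->|ks].
  by exists y.
have [z [Qz zx]] := hx k ks; exists z; split=> //; exact: le_trans xy.
Qed.

Lemma tstar_adj (C : numClosedFieldType) m k (A : 'M[C]_(m, k)) :
  (A ^t Num.conj)%sesqui = adjmx A.
Proof. by apply/matrixP => i j; rewrite !mxE. Qed.

Lemma trB (C : numClosedFieldType) n (X Y : 'M[C]_n) : \tr (X - Y) = \tr X - \tr Y.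
Proof. by rewrite raddfB. Qed.

Lemma herm_gap (C : numClosedFieldType) n (hn : (2 <= n)%N) (A : 'M[C]_n) :
  A = adjmx A ->
  exists l, l \is Num.real /\
  (forall rho sigma, density rho -> density sigma -> \tr (A *m (rho - sigma)) <= l) /\
  exists v1 v2 : 'cV[C]_n, unit_vec v1 /\ unit_vec v2 /\ orthogonal_vec v1 v2 /\
     \tr (A *m (proj v1 - proj v2)) = l.
Proof.
move=> hA.
have hH : A \is hermsymmx.
  apply/is_hermitianmxP; rewrite expr0 scale1r tstar_adj; exact: hA.
set P := spectralmx A; set d := spectral_diag A.
have hP : A = adjmx P *m diag_mx d *m P.
  have := (orthomx_spectralP (hermitian_normalmx hH)).
  rewrite invmx_unitary ?spectral_unitarymx // tstar_adj; by [].
have PP : P *m adjmx P = 1%:M.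
  by rewrite -tstar_adj; apply/unitarymxP; exact: spectral_unitarymx.
have PP' : adjmx P *m P = 1%:M.
  rewrite -tstar_adj -invmx_unitary ?spectral_unitarymx //.
  by rewrite mulVmx // spectral_unit.
have dreal : forall k, d 0 k \is Num.real.
  by move=> k; have /mxOverP := hermitian_spectral_diag_real hH; apply.
pose v k : 'cV[C]_n := adjmx (row k P).
have key : forall X k, (adjmx (v k) *m X *m v k) 0 0 = (P *m X *m adjmx P) k k.
  move=> X k; rewrite /v adjmxK -row_mul !mxE; apply: eq_bigr => l _.
  by rewrite !mxE.
have trf : forall X, \tr (A *m X) = \sum_k d 0 k * (P *m X *m adjmx P) k k.
  move=> X; have -> : A *m X = adjmx P *m (diag_mx d *m (P *m X)) by rewrite hP !mulmxA.
  rewrite mxtrace_mulC -!mulmxA mul_diag_mx /mxtrace; apply: eq_bigr => k _.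
  by rewrite mxE !mulmxA.
have sumf : forall X, \sum_k (P *m X *m adjmx P) k k = \tr X.
  move=> X; rewrite -[\sum_k _]/(\tr _) -mulmxA mxtrace_mulC -mulmxA PP' mulmx1 //.
have orth : forall j k, (adjmx (v j) *m v k) 0 0 = (j == k)%:R.
  move=> j k; have := congr1 (fun M : 'M[C]_n => M j k) PP; rewrite !mxE => <-.
  by rewrite /v adjmxK; apply: eq_bigr => l _; rewrite !mxE.
have trk : forall k, \tr (A *m proj (v k)) = d 0 k.
  move=> k; rewrite trf (bigD1 k) //= big1 ?addr0.
    rewrite -key /proj mulmxA -[_ *m adjmx (v k) *m v k]mulmxA mx11M orth eqxx.
    by rewrite /= !mulr1.
  move=> j /negPf hj; rewrite -key /proj mulmxA -[_ *m adjmx (v k) *m v j]mulmxA.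
  by rewrite mx11M orth hj mul0r mulr0.
have cpos : forall rho, density rho -> forall k, 0 <= (P *m rho *m adjmx P) k k.
  by move=> rho [[_ hr] _] k; rewrite -key; apply: hr.
have csum : forall rho, density rho -> \sum_k (P *m rho *m adjmx P) k k = 1.
  by move=> rho [_ tr1]; rewrite sumf.
have upb : forall rho kM, density rho -> (forall j, d 0 j <= d 0 kM) ->
    \tr (A *m rho) <= d 0 kM.
  move=> rho kM hr hM; rewrite trf -[d 0 kM]mulr1 -(csum _ hr) mulr_sumr.
  by apply: ler_sum => k _; apply: ler_wpM2r; [apply: cpos|apply: hM].
have lob : forall rho km, density rho -> (forall j, d 0 km <= d 0 j) ->
    d 0 km <= \tr (A *m rho).
  move=> rho km hr hm; rewrite trf -[d 0 km]mulr1 -(csum _ hr) mulr_sumr.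
  by apply: ler_sum => k _; apply: ler_wpM2r; [apply: cpos|apply: hm].
have n0 : (0 < n)%N by apply: ltnW.
pose i0 : 'I_n := Ordinal n0.
pose i1 : 'I_n := Ordinal hn.
have [kM [x [_ [-> hkM]]]] := @fmax C _ (fun k x => x = d 0 k) i0
   (fun k => ex_intro _ (d 0 k) (conj (dreal k) erefl)).
have {}hkM : forall j, d 0 j <= d 0 kM by move=> j; have [y [-> ]] := hkM j.
have drealN : forall k, - d 0 k \is Num.real by move=> k; rewrite rpredN.
have [km [x2 [_ [-> hkm]]]] := @fmax C _ (fun k x => x = - d 0 k) i0
   (fun k => ex_intro _ (- d 0 k) (conj (drealN k) erefl)).
have {}hkm : forall j, d 0 km <= d 0 j.
  by move=> j; have [y [-> ]] := hkm j; rewrite lerN2.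
pose k2 := if km != kM then km else (if kM == i0 then i1 else i0).
have k2M : k2 != kM.
  rewrite /k2; case: ifP => // _; case: ifP => [/eqP ->|/negbT]; last by rewrite eq_sym.
  by apply/eqP => /(congr1 val).
have dk2 : d 0 k2 = d 0 km.
  rewrite /k2; case: ifP => // /negbFE /eqP ekm.
  by rewrite ekm; apply/le_anti; rewrite hkM /= -ekm hkm.
exists (d 0 kM - d 0 km); split; first by apply: rpredB.
split.
  move=> rho sigma hr hs; rewrite mulmxBr trB.
  by apply: lerB; [apply: upb|apply: lob].
exists (v kM), (v k2); split; first by rewrite /unit_vec orth eqxx.
split; first by rewrite /unit_vec orth eqxx.
split; first by rewrite /orthogonal_vec orth eq_sym (negbTE k2M).
by rewrite mulmxBr trB !trk dk2.
Qed.

Lemma trN (C : numClosedFieldType) n (X : 'M[C]_n) : \tr (- X) = - \tr X.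
Proof. by rewrite raddfN. Qed.

Lemma tr_sum (C : numClosedFieldType) n (I : finType) (F : I -> 'M[C]_n) :
  \tr (\sum_i F i) = \sum_i \tr (F i).
Proof. by rewrite raddf_sum. Qed.

Lemma main_gen (C : numClosedFieldType) n (hn : (2 <= n)%N) (O : finType)
  (M : O -> 'M[C]_n) (hM : POVM M) :
  exists K : C, is_max (Kvals M) K /\ is_max (PureVals M) (2 * K).
Proof.
have hMi : forall i, M i = adjmx (M i) by move=> i; case: (proj1 hM i).
pose As (s : {ffun O -> bool}) := \sum_i (if s i then M i else - M i).
have hermAs : forall s, As s = adjmx (As s).
  move=> s; apply/matrixP => j k; rewrite adjmxE !summxE rmorph_sum.
  apply: eq_bigr => i _; case: (s i); rewrite ?mxE ?rmorphN {1}(hMi i) adjmxE //.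
have trAs : forall s X, \tr (As s *m X) =
    \sum_i (if s i then \tr (M i *m X) else - \tr (M i *m X)).
  move=> s X; rewrite mulmx_suml tr_sum; apply: eq_bigr => i _.
  by case: (s i); rewrite ?mulNmx ?trN.
have treal : forall rho sigma, density rho -> density sigma ->
    forall i, \tr (M i *m (rho - sigma)) \is Num.real.
  move=> rho sigma [[hr _] _] [[hs _] _] i; apply: tr_herm_real => //.
  by rewrite adjmxB -hr -hs.
have sle : forall rho sigma, density rho -> density sigma -> forall s,
    \tr (As s *m (rho - sigma)) <= dist_sum M rho sigma.
  move=> rho sigma hr hs s; rewrite trAs /dist_sum; apply: ler_sum => i _.
  have ht := treal _ _ hr hs i.
  case: (s i); first exact: real_ler_norm.
  by rewrite -normrN real_ler_norm // rpredN.
have seq : forall rho sigma, density rho -> density sigma -> exists s,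
    \tr (As s *m (rho - sigma)) = dist_sum M rho sigma.
  move=> rho sigma hr hs.
  exists [ffun i => 0 <= \tr (M i *m (rho - sigma))].
  rewrite trAs /dist_sum; apply: eq_bigr => i _; rewrite ffunE.
  have ht := treal _ _ hr hs i.
  case: ifP => h; first by rewrite ger0_norm.
  rewrite ltr0_norm //; rewrite real_ltNge ?h //.
have [s1 [G [rG [[_ [v1 [v2 [u1 [u2 [o12 hG]]]]]] hmax]]]] :=
  @fmax C {ffun O -> bool} (fun s l =>
   (forall rho sigma, density rho -> density sigma -> \tr (As s *m (rho - sigma)) <= l) /\
   exists v1 v2 : 'cV[C]_n, unit_vec v1 /\ unit_vec v2 /\ orthogonal_vec v1 v2 /\
     \tr (As s *m (proj v1 - proj v2)) = l) [ffun => true]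
   (fun s => let: ex_intro l (conj rl Ql) := @herm_gap C n hn (As s) (hermAs s) in
             ex_intro _ l (conj rl Ql)).
have ub : forall rho sigma, density rho -> density sigma -> dist_sum M rho sigma <= G.
  move=> rho sigma hr hs; have [s0 <-] := seq _ _ hr hs.
  have [y [[hy _] yG]] := hmax s0; exact: le_trans (hy _ _ hr hs) yG.
have d1 := @proj_density C n v1 u1; have d2 := @proj_density C n v2 u2.
have wG : dist_sum M (proj v1) (proj v2) = G.
  by apply/le_anti; rewrite ub //= -hG sle.
exists (2^-1 * G); split.
  split; first by exists (proj v1), (proj v2); rewrite wG.
  move=> u [rho [sigma [hr [hs ->]]]]; apply: ler_wpM2l; last exact: ub.
  by rewrite invr_ge0 ler0n.
have -> : 2 * (2^-1 * G) = G by rewrite mulrA mulfV ?mul1r // pnatr_eq0.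
split; first by exists v1, v2; rewrite wG.
move=> u [p [q [up [uq [_ ->]]]]]; apply: ub; exact: (@proj_density C n).
Qed.

Theorem mainTheorem7 (R : realType) (n : nat) (hn : (2 <= n)%N) (O : finType)
  (M : O -> 'M[R[i]]_n) (hM : POVM M) :
  exists K : R[i], is_max (Kvals M) K /\ is_max (PureVals M) (2 * K).
Proof. exact: main_gen. Qed.
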